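(* For all $n\in\mathbb N=\{0,1,2,\dots\}$ and all integers $d\geq 1$, the rational fraction $$S_{n,d}=\sum_{k=0}^nU_{d-1}\circ T_{(d+1)^k}\prod_{j=0}^k\frac{1}{U_d\circ T_{(d+1)^j}}\in\mathbb Q(x)$$ satisfies the identity $$S_{n,d}^2-2xS_{n,d}+1=\left(\prod_{j=0}^n\frac{1}{U_d\circ T_{(d+1)^j}}\right)^2.$$
   Context: $T_n=T_n(x)$ and $U_n=U_n(x)$ denote the Chebyshev polynomials of the first and second kind, defined by $T_0=1$, $T_1=x$, $T_{n+1}=2xT_n-T_{n-1}$ and $U_0=1$, $U_1=2x$, $U_{n+1}=2xU_n-U_{n-1}$ for $n\geq1$. The symbol $\circ$ denotes composition of polynomials, so $U_{d}\circ T_m$ is $U_d(T_m(x))$. *)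

(* Defs.v *)
From HB Require Import structures.
From mathcomp Require Import all_boot all_order all_algebra fraction.
Set Implicit Arguments. Unset Strict Implicit. Unset Printing Implicit Defensive.
Import Order.TTheory GRing.Theory Num.Theory.
Local Open Scope ring_scope.

Fixpoint chebT (n : nat) : {poly rat} :=
  match n with
  | 0 => 1
  | 1 => 'X
  | (m.+1 as k).+1 => 2%:P * 'X * chebT k - chebT m
  end.

Fixpoint chebU (n : nat) : {poly rat} :=
  match n with
  | 0 => 1
  | 1 => 2%:P * 'X
  | (m.+1 as k).+1 => 2%:P * 'X * chebU k - chebU m
  end.

Definition toQx (p : {poly rat}) : {fraction {poly rat}} := @FracField.tofrac _ p.

Definition Dj (d j : nat) : {fraction {poly rat}} :=
  toQx (chebU d \Po chebT ((d.+1) ^ j)%N).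

Definition S_nd (n d : nat) : {fraction {poly rat}} :=
  \sum_(k < n.+1)
     toQx (chebU d.-1 \Po chebT ((d.+1) ^ k)%N) * \prod_(j < k.+1) (Dj d j)^-1.

(* Main.v *)
Require Import Defs.
From HB Require Import structures.
From mathcomp Require Import all_boot all_order all_algebra fraction.
Import Order.TTheory GRing.Theory Num.Theory.
Local Open Scope ring_scope.
From mathcomp Require Import ring zify.
Set Implicit Arguments.
Section Cheb.
Variable R : comNzRingType.

Fixpoint tc (y : R) (n : nat) : R :=
  match n with
  | 0 => 1
  | 1 => y
  | (m.+1 as k).+1 => 2%:R * y * tc y k - tc y m
  end.

Fixpoint wc (y : R) (n : nat) : R :=
  match n with
  | 0 => 0
  | 1 => 1
  | (m.+1 as k).+1 => 2%:R * y * wc y k - wc y m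
  end.

Definition isrec (y : R) (s : nat -> R) := forall n, s n.+2 = 2%:R * y * s n.+1 - s n.

Lemma tc_rec y : isrec y (tc y). Proof. by []. Qed.
Lemma wc_rec y : isrec y (wc y). Proof. by []. Qed.

Lemma ind2 (P : nat -> Prop) : P 0%N -> P 1%N -> (forall n, P n -> P n.+1 -> P n.+2) -> forall n, P n.
Proof.
move=> H0 H1 HS n; suff: P n /\ P n.+1 by case.
elim: n => [|n [A B]]; first by split.
by split => //; apply: HS.
Qed.

Lemma alg (A4 A2 A0 s2 Sb1 Sb2 Sb3 T0 T1 y : R) :
  A2 + A0 = 2%:R * T1 * Sb1 -> A4 + s2 = 2%:R * T1 * Sb3 ->
  A2 + s2 = 2%:R * T0 * Sb2 -> Sb3 = 2%:R * y * Sb2 - Sb1 ->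
  A4 + A0 = 2%:R * (2%:R * y * T1 - T0) * Sb2.
Proof.
move=> h1 h2 h3 h4.
have -> : A4 = 2%:R * T1 * Sb3 - s2 by rewrite -h2 addrK.
have -> : A0 = 2%:R * T1 * Sb1 - A2 by rewrite -h1 [A2 + _]addrC addrK.
have -> : s2 = 2%:R * T0 * Sb2 - A2 by rewrite -h3 [A2 + _]addrC addrK.
rewrite h4; ring.
Qed.

Lemma recL y s (hs : isrec y s) b m :
  s (m + 2 * b)%N + s m = 2%:R * tc y b * s (m + b)%N.
Proof.
elim/ind2: b m => [m|m|b IH1 IH2 m].
- by rewrite !addn0 /=; ring.
- by rewrite /= addn2 hs addn1; ring.
- have E1 := IH2 m. have E2 := IH2 m.+2. have E3 := IH1 m.+2.
  have R1 := hs (m + b.+1)%N.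
  have -> : (m + 2 * b.+2 = m.+2 + 2 * b.+1)%N by lia.
  rewrite (tc_rec y b).
  have e : (m + b.+2 = (m + b.+1).+1)%N by lia.
  rewrite e; eapply alg; first exact: E1.
  + exact: E2.
  + have -> : (m + 2 * b.+1 = m.+2 + 2 * b)%N by lia.
    have -> : ((m + b.+1).+1 = m.+2 + b)%N by lia.
    exact: E3.
  + have -> : (m.+2 + b.+1 = (m + b.+1).+2)%N by lia.
    exact: R1.
Qed.

Lemma step3 (a b c t : R) : a + c = 2%:R * t * b -> a = 2%:R * t * b - c.
Proof. by move=> <-; rewrite addrK. Qed.
Arguments step3 {a b c t}.

Lemma tcM y b n : tc y (n * b) = tc (tc y b) n.
Proof.
elim/ind2: n => [|| n IH1 IH2]; first by rewrite mul0n.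
  by rewrite mul1n.
have H := recL (@tc_rec y) b (n * b).
have -> : (n.+2 * b = n * b + 2 * b)%N by lia.
rewrite (step3 H) tc_rec -IH1 -IH2.
by have -> : (n * b + b = n.+1 * b)%N by lia.
Qed.

Lemma wcM y b n : wc y (n * b) = wc (tc y b) n * wc y b.
Proof.
elim/ind2: n => [|| n IH1 IH2]; first by rewrite mul0n /= mul0r.
  by rewrite mul1n /= mul1r.
have H := recL (@wc_rec y) b (n * b).
have -> : (n.+2 * b = n * b + 2 * b)%N by lia.
rewrite (step3 H) wc_rec.
have -> : (n * b + b = n.+1 * b)%N by lia.
rewrite IH1 IH2; ring.
Qed.

Lemma tcW y k : tc y k.+1 = y * wc y k.+1 - wc y k.
Proof.
elim/ind2: k => [|| k IH1 IH2]; first by rewrite /=; ring.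
  by rewrite /=; ring.
rewrite tc_rec IH2 IH1 !wc_rec; ring.
Qed.

Lemma tcS y k : tc y k.+1 = y * tc y k + (y^+2 - 1) * wc y k
  /\ wc y k.+1 = tc y k + y * wc y k.
Proof.
elim/ind2: k => [|| k [IH1 IH1'] [IH2 IH2']]; first by rewrite /=; split; ring.
  by rewrite /=; split; ring.
rewrite (tc_rec y k.+1) (wc_rec y k.+1) !IH2 !IH2' !IH1 !IH1'; split; ring.
Qed.

Lemma pell y k : tc y k ^+ 2 - (y ^+ 2 - 1) * wc y k ^+ 2 = 1.
Proof.
elim: k => [|k IH]; first by rewrite /=; ring.
have [-> ->] := tcS y k; rewrite -[X in _ = X]IH; ring.
Qed.
End Cheb.

Arguments tc {R}. Arguments wc {R}.

Lemma wc1 k : (wc 'X k : {poly rat}).[1] = k%:R.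
Proof.
elim/ind2: k => [|| k IH1 IH2]; first by rewrite /= hornerC.
  by rewrite /= hornerC.
rewrite wc_rec !hornerE IH1 IH2 -[k.+2]addn1 -[k.+1]addn1 !natrD; ring.
Qed.
Lemma chebT_comp n q : chebT n \Po q = tc q n.
Proof.
elim/ind2: n => [|| n IH1 IH2]; first by rewrite /= comp_polyC.
  by rewrite /= comp_polyX.
rewrite [chebT _]/= tc_rec comp_polyB !comp_polyM comp_polyC comp_polyX IH1 IH2.
by rewrite polyC_natr.
Qed.
Lemma chebU_comp n q : chebU n \Po q = wc q n.+1.
Proof.
elim/ind2: n => [|| n IH1 IH2]; first by rewrite /= comp_polyC.
  by rewrite /= comp_polyM comp_polyC comp_polyX polyC_natr mulr1 subr0.
have -> : chebU n.+2 = 2%:P * 'X * chebU n.+1 - chebU n by [].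
rewrite wc_rec comp_polyB !comp_polyM comp_polyC comp_polyX IH1 IH2.
by rewrite polyC_natr.
Qed.


Local Notation FQ := {fraction {poly rat}}.

Lemma chebTX k : chebT k = tc 'X k.
Proof. by rewrite -chebT_comp comp_polyXr. Qed.

Lemma W_neq0 k : (0 < k)%N -> (wc ('X : {poly rat}) k) != 0.
Proof.
move=> hk; apply/eqP => h.
have := wc1 k; rewrite h horner0 => /eqP; rewrite eq_sym pnatr_eq0; lia.
Qed.

Lemma toQx_neq0 p : p != 0 -> toQx p != 0.
Proof. by rewrite /toQx tofrac_eq0. Qed.

Lemma W1 : wc ('X : {poly rat}) 1 = 1. Proof. by []. Qed.
Lemma toQx1 : toQx 1 = 1. Proof. exact: tofrac1. Qed.
Lemma toQxM p q : toQx (p * q) = toQx p * toQx q. Proof. exact: tofracM. Qed.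
Lemma toQxB p q : toQx (p - q) = toQx p - toQx q. Proof. exact: tofracB. Qed.

Lemma prodD d k :
  \prod_(j < k) Dj d j = toQx (wc 'X (d.+1 ^ k)).
Proof.
elim: k => [|k IH]; first by rewrite big_ord0 expn0 W1 toQx1.
rewrite big_ord_recr IH /Dj chebU_comp chebTX.
transitivity (toQx (wc 'X (d.+1^k) * wc (tc 'X (d.+1 ^ k)) d.+1)).
  by rewrite toQxM.
by rewrite expnS wcM mulrC.
Qed.

Lemma fbase (F : fieldType) (x a b : F) : a != 0 ->
  b / (a * 1) = x - (x * (a * 1) - b) / (a * 1).
Proof. by move=> nA; field. Qed.
Lemma fstep (F : fieldType) (x t a b c : F) : a != 0 -> b != 0 ->
  (x - t / b) + c * (a * b)^-1 = x - (t * a - c) / (a * b).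
Proof. by move=> nA nB; field; rewrite nA nB. Qed.
Lemma Sform n d (hd : (1 <= d)%N) :
  S_nd n d = toQx 'X - toQx (tc 'X (d.+1 ^ n.+1)) / toQx (wc 'X (d.+1 ^ n.+1)).
Proof.
have hV k : chebU d.-1 \Po chebT (d.+1 ^ k) = wc (tc 'X (d.+1 ^ k)) d.
  rewrite chebU_comp chebTX. by rewrite prednK.
have hP k : \prod_(j < k) (Dj d j)^-1 = (toQx (wc 'X (d.+1 ^ k)))^-1.
  by rewrite prodfV prodD.
have nz k : toQx (wc 'X (d.+1 ^ k)) != 0.
  by apply: toQx_neq0; apply: W_neq0; rewrite expn_gt0.
have key k : toQx (wc 'X (d.+1 ^ k.+1)) =
   toQx (wc (tc 'X (d.+1 ^ k)) d.+1) * toQx (wc 'X (d.+1 ^ k)).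
  rewrite -toQxM. rewrite expnS. by rewrite wcM.
have keyT k : toQx (tc 'X (d.+1 ^ k.+1)) =
   toQx (tc 'X (d.+1 ^ k)) * toQx (wc (tc 'X (d.+1 ^ k)) d.+1)
   - toQx (wc (tc 'X (d.+1 ^ k)) d).
  rewrite -toQxM -toQxB expnS. rewrite tcM. rewrite tcW. by rewrite mulrC.
have nzA k : toQx (wc (tc 'X (d.+1 ^ k)) d.+1) != 0.
  apply: toQx_neq0.
  have := @W_neq0 (d.+1 ^ k.+1) (expn_gt0 _ _).
  rewrite expnS wcM mulf_eq0 negb_or. by case/andP.
elim: n => [|n IH].
  rewrite /S_nd big_ord1 (hV 0%N) (hP 1%N) (keyT 0%N) (key 0%N) expn0.
  have nA := nzA 0%N. rewrite expn0 in nA.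
  have -> : toQx (tc 'X 1) = toQx 'X by [].
  rewrite W1 toQx1.
  exact: fbase.
transitivity (S_nd n d + toQx (chebU d.-1 \Po chebT (d.+1 ^ n.+1)) *
   \prod_(j < n.+2) (Dj d j)^-1).
  by rewrite /S_nd big_ord_recr.
rewrite IH hV hP (key n.+1) (keyT n.+1).
exact: fstep.
Qed.

Lemma toQxX p k : toQx (p ^+ k) = toQx p ^+ k. Proof. exact: tofracXn. Qed.

Lemma ffinal (F : fieldType) (x t w : F) : w != 0 ->
  t ^+ 2 - (x ^+ 2 - 1) * w ^+ 2 = 1 ->
  (x - t / w) ^+ 2 - 2%:R * x * (x - t / w) + 1 = (w^-1) ^+ 2.
Proof.
move=> nw h.
have : (x - t / w) ^+ 2 - 2%:R * x * (x - t / w) + 1 - (w^-1) ^+ 2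
  = (t ^+ 2 - (x ^+ 2 - 1) * w ^+ 2 - 1) / w ^+ 2 by field.
by rewrite h subrr mul0r => /eqP; rewrite subr_eq0 => /eqP.
Qed.

Theorem theorem1p1 (n d : nat) (hd : (1 <= d)%N) :
  S_nd n d ^+ 2 - 2%:R * toQx 'X * S_nd n d + 1
  = (\prod_(j < n.+1) (Dj d j)^-1) ^+ 2.
Proof.
rewrite Sform // prodfV prodD.
apply: ffinal.
  by apply: toQx_neq0; apply: W_neq0; rewrite expn_gt0.
have := congr1 toQx (@pell _ 'X (d.+1 ^ n.+1)).
by rewrite toQxB toQxX toQxM toQxX toQxB toQxX toQx1.
Qed.
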